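(* For any compact metric space $(X,d)$, $$\underline{\dim}(X,d)\le\underline{\mathrm{mo}}(\mathcal K(X),H)\le\overline{\mathrm{mo}}(\mathcal K(X),H)\le\overline{\dim}(X,d).$$
   Context: For a metric space $Y$ with metric $\rho$, $A\subset Y$ nonempty and $\varepsilon>0$, $N(A,\varepsilon)$ is the smallest cardinality of a set $E\subset Y$ with $A\subset\bigcup_{x\in E}B(x,\varepsilon)$. Upper/lower box dimensions: $\overline{\dim}(A)=\limsup_{\varepsilon\to0}\frac{\log N(A,\varepsilon)}{-\log\varepsilon}$, $\underline{\dim}(A)$ with liminf. Upper/lower metric orders: $\overline{\mathrm{mo}}(A)=\limsup_{\varepsilon\to0}\frac{\log\log N(A,\varepsilon)}{-\log\varepsilon}$, $\underline{\mathrm{mo}}(A)$ with liminf. $\mathcal K(X)$ is the space of nonempty closed subsets of $X$ with the Hausdorff metric $H$. *)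

(* Defs.v *)
From Stdlib Require List.
From HB Require Import structures.
From mathcomp Require Import all_boot all_order all_algebra.
From mathcomp Require Import all_classical all_reals all_analysis.
Set Implicit Arguments. Unset Strict Implicit. Unset Printing Implicit Defensive.
Import Order.TTheory GRing.Theory Num.Theory.
Local Open Scope classical_set_scope.
Local Open Scope ring_scope.

Section MetricDefs.
Variable R : realType.

Definition is_metric (T : Type) (d : T -> T -> R) : Prop :=
  [/\ forall x y, 0 <= d x y,
      forall x y, d x y = 0 <-> x = y,
      forall x y, d x y = d y x &
      forall x y z, d x z <= d x y + d y z].

Definition dball (T : Type) (d : T -> T -> R) (x : T) (e : R) : set T :=
  [set y | d x y < e].

Definition dopen (T : Type) (d : T -> T -> R) (U : set T) : Prop :=
  forall x, U x -> exists2 e : R, 0 < e & dball d x e `<=` U.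

Definition dclosed (T : Type) (d : T -> T -> R) (A : set T) : Prop :=
  dopen d (~` A).

Definition dcompact (T : Type) (d : T -> T -> R) : Prop :=
  forall F : set (set T), (forall U, F U -> dopen d U) ->
    setT `<=` \bigcup_(U in F) U ->
    exists2 s : seq (set T), (forall U, List.In U s -> F U) &
      setT `<=` \bigcup_(U in [set U | List.In U s]) U.

Definition covers_with (T : Type) (d : T -> T -> R) (A : set T) (e : R)
  (n : nat) : Prop :=
  exists E : seq T, size E = n /\ A `<=` \bigcup_(x in [set x | List.In x E]) dball d x e.

(* N(A, e): least cardinality of such a covering set (0 if none is finite;
   this never happens for totally bounded spaces) *)
Definition covnum (T : Type) (d : T -> T -> R) (A : set T) (e : R) : nat :=
  match pselect (exists n, covers_with d A e n) with
  | left h => ex_minn (P := fun n => `[< covers_with d A e n >])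
                (let: ex_intro n hn := h in ex_intro _ n (asboolT hn))
  | right _ => 0%N
  end.

Definition limsup0 (f : R -> \bar R) : \bar R :=
  ereal_inf [set ereal_sup [set f e | e in [set e | 0 < e < delta]]
            | delta in [set delta : R | 0 < delta]].
Definition liminf0 (f : R -> \bar R) : \bar R :=
  ereal_sup [set ereal_inf [set f e | e in [set e | 0 < e < delta]]
            | delta in [set delta : R | 0 < delta]].

Definition box_ratio (T : Type) (d : T -> T -> R) (A : set T) (e : R) : \bar R :=
  (ln (covnum d A e)%:R / (- ln e))%:E.
Definition mo_ratio (T : Type) (d : T -> T -> R) (A : set T) (e : R) : \bar R :=
  (ln (ln (covnum d A e)%:R) / (- ln e))%:E.

Definition upper_box_dim (T : Type) (d : T -> T -> R) (A : set T) : \bar R :=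
  limsup0 (box_ratio d A).
Definition lower_box_dim (T : Type) (d : T -> T -> R) (A : set T) : \bar R :=
  liminf0 (box_ratio d A).
Definition upper_metric_order (T : Type) (d : T -> T -> R) (A : set T) : \bar R :=
  limsup0 (mo_ratio d A).
Definition lower_metric_order (T : Type) (d : T -> T -> R) (A : set T) : \bar R :=
  liminf0 (mo_ratio d A).

Definition hyperspace (T : Type) (d : T -> T -> R) : Type :=
  {A : set T | A !=set0 /\ dclosed d A}.

Definition hausdorff_dist (T : Type) (d : T -> T -> R) (A B : set T) : R :=
  Num.max (sup [set inf [set d a b | b in B] | a in A])
          (sup [set inf [set d a b | a in A] | b in B]).

Definition hausdorff (T : Type) (d : T -> T -> R) :
  hyperspace d -> hyperspace d -> R :=
  fun A B => hausdorff_dist d (proj1_sig A) (proj1_sig B).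

End MetricDefs.

(* Main.v *)
From Stdlib Require List.
Require Import Defs.
From HB Require Import structures.
From mathcomp Require Import all_boot all_order all_algebra.
From mathcomp Require Import all_classical all_reals all_analysis.
From mathcomp Require Import lra zify.
Import Order.TTheory GRing.Theory Num.Theory.
Local Open Scope classical_set_scope.
Local Open Scope ring_scope.

Section Lim.
Variable R : realType.
Implicit Types f g : R -> \bar R.

Lemma liminf0_gt f (r : \bar R) : (r < liminf0 f)%E ->
  exists2 D : R, 0 < D & forall e, 0 < e < D -> (r < f e)%E.
Proof.
move=> /ereal_sup_gt [y [D D0 <-] ry]; exists D => // e he.
apply: (lt_le_trans ry); apply: ereal_inf_lbound; by exists e.
Qed.

Lemma liminf0_ge f (x : \bar R) :
  (exists2 D : R, 0 < D & forall e, 0 < e < D -> (x <= f e)%E) -> (x <= liminf0 f)%E.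
Proof.
move=> [D D0 H]; apply: le_trans (ereal_sup_ubound _); last by exists D.
apply: le_ereal_inf_tmp => _ [e he <-]; exact: H.
Qed.

Lemma limsup0_lt f (r : \bar R) : (limsup0 f < r)%E ->
  exists2 D : R, 0 < D & forall e, 0 < e < D -> (f e < r)%E.
Proof.
move=> /ereal_inf_lt [y [D D0 <-] ry]; exists D => // e he.
apply: le_lt_trans ry; apply: ereal_sup_ubound; by exists e.
Qed.

Lemma limsup0_le f (x : \bar R) :
  (exists2 D : R, 0 < D & forall e, 0 < e < D -> (f e <= x)%E) -> (limsup0 f <= x)%E.
Proof.
move=> [D D0 H]; apply: le_trans; first (apply: ereal_inf_lbound; by exists D).
apply: ge_ereal_sup => _ [e he <-]; exact: H.
Qed.

Lemma liminf0_le_limsup0 f : (liminf0 f <= limsup0 f)%E.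
Proof.
apply: ge_ereal_sup => _ [D1 D10 <-].
apply: le_ereal_inf_tmp => _ [D2 D20 <-].
pose e := Num.min D1 D2 / 2.
have e0 : 0 < e by rewrite divr_gt0 // lt_min D10.
have m0 : 0 < Num.min D1 D2 by rewrite lt_min D10.
have em : e < Num.min D1 D2 by rewrite /e ltr_pdivrMr // ltr_pMr // ltr1n.
have eD1 : e < D1 by apply: (lt_le_trans em); rewrite ge_min lexx.
have eD2 : e < D2 by apply: (lt_le_trans em); rewrite ge_min lexx orbT.
apply: (@le_trans _ _ (f e)).
  apply: ereal_inf_lbound; exists e => //; by apply/andP.
apply: ereal_sup_ubound; exists e => //; by apply/andP.
Qed.

Lemma ereal_le_approx_lo (F G : \bar R) :
  (forall r : R, (r%:E < F)%E -> forall t, 0 < t -> ((r - t)%:E <= G)%E) -> (F <= G)%E.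
Proof.
case: F => [f| |] H; last by rewrite leNye.
- apply/lee_subgt0Pr => t t0.
  have -> : (f%:E - t%:E = (f - t / 2 - t / 2)%:E)%E by rewrite -addrA -opprD -splitr.
  apply: H.
    by rewrite lte_fin ltrBlDr ltrDl divr_gt0.
  by rewrite divr_gt0.
- case: G H => [g| |] H //.
  + exfalso; have := H (g + 2) (ltry _) 1 ltr01; rewrite lee_fin; apply/negP.
    by rewrite -ltNge -addrA ltrDl subr_gt0 ltr1n.
  + by have := H 0 (ltry _) 1 ltr01.
Qed.

Lemma ereal_le_approx_hi (F G : \bar R) :
  (forall r : R, (G < r%:E)%E -> forall t, 0 < t -> (F <= (r + t)%:E)%E) -> (F <= G)%E.
Proof.
case: G => [g| |] H; last first.
- case: F H => [f| |] H //.
  + exfalso; have := H (f - 2) (ltNyr _) 1 ltr01; rewrite lee_fin; apply/negP.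
    by rewrite -ltNge -addrA gtrDl addrC subr_lt0 ltr1n.
  + by have := H 0 (ltNyr _) 1 ltr01.
- by rewrite leey.
- apply/lee_addgt0Pr => t t0.
  have -> : (g%:E + t%:E = (g + t / 2 + t / 2)%:E)%E by rewrite -addrA -splitr.
  apply: H.
    by rewrite lte_fin ltrDl divr_gt0.
  by rewrite divr_gt0.
Qed.
End Lim.
Arguments liminf0_gt {R f r}. Arguments liminf0_ge {R f x}.
Arguments limsup0_lt {R f r}. Arguments limsup0_le {R f x}.
Arguments ereal_le_approx_lo {R F G}. Arguments ereal_le_approx_hi {R F G}.
Arguments liminf0_le_limsup0 {R f}.

Section R.
Variable R : realType.

Lemma ln2_gt0 : 0 < ln (2 : R). Proof. by apply: ln_gt0; rewrite ltr1n. Qed.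
Lemma ln2_le1 : ln (2 : R) <= 1.
Proof. have := @le_ln1Dx R 1; rewrite (_ : 1 + 1 = 2 :> R) //; apply; lra. Qed.

Lemma ln_nat_ge0 {A : nat} : (1 <= A)%N -> 0 <= ln (A%:R : R).
Proof. by move=> h; apply: ln_ge0; rewrite ler1n. Qed.

Lemma ln_mono {x y : R} : 0 < x -> x <= y -> ln x <= ln y.
Proof. move=> x0 xy; rewrite ler_ln // posrE; exact: lt_le_trans xy. Qed.

Lemma ln_pow2 (A : nat) : ln ((2 ^ A)%:R : R) = A%:R * ln 2.
Proof. by rewrite natrX lnXn ?ltr0n // mulr_natl. Qed.

Lemma lnln_up (A B : nat) : (1 <= A)%N -> (1 <= B)%N -> (B <= 2 ^ A)%N ->
  ln (ln (B%:R : R)) <= ln (A%:R : R).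
Proof.
move=> hA hB hBA.
have lnA := ln_nat_ge0 hA.
have [hB1|hB2] := leqP B 1.
  have -> : B = 1%N by apply/eqP; rewrite eqn_leq hB1 hB.
  by rewrite ln1 (@ln0 R 0 (lexx _)).
have l2 := ln2_gt0.
have h1 : ln 2 <= ln (B%:R : R) by apply: ln_mono; rewrite ?ler_nat ?ltr0n.
have h2 : ln (B%:R : R) <= A%:R * ln 2.
  rewrite -ln_pow2; apply: ln_mono; rewrite ?ler_nat ?ltr0n //; lia.
have hA0 : (0 : R) < A%:R by rewrite ltr0n.
have hp : 0 < ln (B%:R : R) by exact: lt_le_trans h1.
apply: le_trans (ln_mono hp h2) _.
rewrite lnM ?posrE //.
have : ln (ln (2 : R)) <= 0 by apply: ln_le0; exact: ln2_le1.
lra.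
Qed.

Lemma lnln_lo (A B : nat) : (1 <= A)%N -> (1 <= B)%N -> (2 ^ A <= B.+1)%N ->
  ln (A%:R : R) + ln (ln 2 / 2) <= ln (ln (B%:R : R)).
Proof.
move=> hA hB hBA.
have l2 := ln2_gt0; have l21 := ln2_le1.
have c0 : 0 < ln (2 : R) / 2 by rewrite divr_gt0.
have c1 : ln (2 : R) / 2 <= 1 by rewrite ler_pdivrMr //; lra.
have lc := ln_le0 c1.
have [hA1|hA2] := leqP A 1.
  have -> : A = 1%N by apply/eqP; rewrite eqn_leq hA1 hA.
  rewrite ln1 add0r.
  have [hB1|hB2] := leqP B 1.
    have -> : B = 1%N by apply/eqP; rewrite eqn_leq hB1 hB.
    by rewrite ln1 (@ln0 R 0 (lexx _)).
  apply: ln_mono => //.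
  have : ln 2 <= ln (B%:R : R) by apply: ln_mono; rewrite ?ler_nat ?ltr0n.
  lra.
have hx : (2 ^ A.-1 <= B)%N.
  have e : (2 ^ A = 2 * 2 ^ A.-1)%N by rewrite -expnS prednK // ltnW.
  have : (2 <= 2 ^ A.-1)%N by rewrite -{1}(expn1 2) leq_exp2l //; lia.
  lia.
have h1 : A.-1%:R * ln 2 <= ln (B%:R : R).
  rewrite -ln_pow2; apply: ln_mono; rewrite ?ler_nat ?ltr0n ?expn_gt0 //.
have hA0 : (2 : R) <= A%:R by rewrite ler_nat.
have hAm : (A.-1%:R : R) = A%:R - 1 by rewrite -subn1 natrB.
rewrite -lnM ?posrE //; last by rewrite ltr0n ltnW.
apply: ln_mono; first by rewrite mulr_gt0 // ltr0n ltnW.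
rewrite hAm in h1; nra.
Qed.
End R.

Lemma In_nth (T : Type) (y0 : T) (s : seq T) c : List.In c s ->
  exists2 i, (i < size s)%N & nth y0 s i = c.
Proof.
elim: s => //= a s IH [->|/IH [i hi <-]]; first by exists 0%N.
by exists i.+1.
Qed.

Lemma In_mem (T : eqType) (s : seq T) c : c \in s -> List.In c s.
Proof. elim: s => //= a s IH; rewrite in_cons => /orP [/eqP ->|/IH]; auto. Qed.

Lemma mem_In (T : eqType) (s : seq T) c : List.In c s -> c \in s.
Proof. elim: s => //= a s IH [->|/IH h]; by rewrite in_cons ?eqxx ?h ?orbT. Qed.

Lemma covnumP (R : realType) (T : Type) (dd : T -> T -> R) A e :
  (exists n, covers_with dd A e n) ->
  covers_with dd A e (covnum dd A e) /\ forall n, covers_with dd A e n -> (covnum dd A e <= n)%N.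
Proof.
move=> h; rewrite /covnum; case: pselect => // h'.
case: ex_minnP => m /asboolP Hm Hmin; split => // n hn; apply: Hmin; exact/asboolP.
Qed.

Arguments In_nth {T} y0 {s c}.
Arguments covnumP {R T dd A e}.

Section Metric.
Variables (R : realType) (X : Type) (d : X -> X -> R).
Hypothesis hm : is_metric d.
Variable x0 : X.
Hypothesis hc : dcompact d.

Lemma d_ge0 x y : 0 <= d x y. Proof. by case: hm. Qed.
Lemma d_eq0 x y : d x y = 0 <-> x = y. Proof. by case: hm. Qed.
Lemma d_sym x y : d x y = d y x. Proof. by case: hm. Qed.
Lemma d_tri x y z : d x z <= d x y + d y z. Proof. by case: hm. Qed.
Lemma d_xx x : d x x = 0. Proof. exact/d_eq0. Qed.

Lemma dball_open x e : dopen d (dball d x e).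
Proof.
move=> y hy; exists (e - d x y); first by rewrite subr_gt0.
move=> z; rewrite /dball /= => hz.
by apply: (le_lt_trans (d_tri x y z)); rewrite -ltrBrDl.
Qed.

Lemma centers (e : R) (s : seq (set X)) :
  (forall U, List.In U s -> exists x, U = dball d x e) ->
  exists E : seq X, forall U, List.In U s -> exists2 x, List.In x E & U = dball d x e.
Proof.
elim: s => [|U s IH] H; first by exists [::].
have [|E HE] := IH; first by move=> V hV; apply: H; right.
have [x ->] := H U (or_introl erefl).
exists (x :: E) => V /= [<-|/HE [y hy ->]]; first by exists x; auto.
by exists y; auto.
Qed.

Lemma cover_ex e : 0 < e -> exists n, covers_with d setT e n.
Proof.
move=> e0.
have h1 : forall U, [set U | exists x, U = dball d x e] U -> dopen d U.
  by move=> U [x ->]; apply: dball_open.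
have h2 : setT `<=` \bigcup_(U in [set U | exists x, U = dball d x e]) U.
  move=> y _; exists (dball d y e); first by exists y.
  by rewrite /dball /= d_xx.
have [s Hs Hcov] := hc _ h1 h2.
have [E HE] := centers _ _ Hs.
exists (size E), E; split => // y _.
have [U hU hyU] := Hcov y I.
have [x hx hUx] := HE U hU.
by exists x => //; rewrite -hUx.
Qed.

Lemma covnum_ge1 (T : Type) (dd : T -> T -> R) (t0 : T) e : (exists n, covers_with dd setT e n) ->
  (1 <= covnum dd setT e)%N.
Proof.
move=> /covnumP [[E [hE hcov]] _]; rewrite lt0n; apply/negP => /eqP h0.
move: hE; rewrite h0 => /size0nil hE; subst E.
by have [x] := hcov t0 I.
Qed.

Lemma dbounded : exists D, forall x y, d x y <= D.
Proof.
have [n [E [_ hcov]]] := cover_ex 1 ltr01.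
have [M HM] : exists M, forall u, List.In u E -> d x0 u <= M.
  elim: E {hcov} => [|a E [M HM]]; first by exists 0.
  exists (Num.max (d x0 a) M) => u /= [<-|/HM h]; first by rewrite le_max lexx.
  by rewrite le_max h orbT.
exists (2 * (M + 1)) => x y.
have [u hu hxu] := hcov x I; have [v hv hyv] := hcov y I.
rewrite /dball /= in hxu hyv.
have h1 : d x0 x <= M + 1 by apply: (le_trans (d_tri _ u _)); apply: lerD; [exact: HM|exact: ltW].
have h2 : d x0 y <= M + 1 by apply: (le_trans (d_tri _ v _)); apply: lerD; [exact: HM|exact: ltW].
apply: (le_trans (d_tri _ x0 _)); rewrite mulr2n mulrDl mul1r; apply: lerD => //.
by rewrite d_sym.
Qed.

Lemma fin_closed (s : seq X) : dclosed d [set y | List.In y s].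
Proof.
move=> x /= hx.
suff [e e0 He] : exists2 e, 0 < e & forall y, List.In y s -> e <= d x y.
  exists e => // z; rewrite /dball /= => hz hzs.
  by have := He z hzs; rewrite leNgt hz.
elim: s hx => [|a s IH] hx; first by exists 1.
have [|e e0 He] := IH; first by move=> h; apply: hx; right.
have hax : 0 < d x a.
  rewrite lt_neqAle d_ge0 andbT; apply/negP => /eqP h.
  by apply: hx; left; apply/esym/d_eq0.
exists (Num.min e (d x a)); first by rewrite lt_min e0.
move=> y /= [<-|/He h]; first by rewrite ge_min lexx orbT.
by rewrite ge_min h.
Qed.

Lemma closedT : dclosed d setT.
Proof. by move=> x /= []. Qed.

Definition toK (s : seq X) : hyperspace d :=
  match pselect ([set y | List.In y s] !=set0) with
  | left h => exist _ _ (conj h (fin_closed s))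
  | right _ => exist _ setT (conj (ex_intro _ x0 I) closedT)
  end.

Lemma toK_val s : (exists y, List.In y s) -> proj1_sig (toK s) = [set y | List.In y s].
Proof. by move=> h; rewrite /toK; case: pselect. Qed.


Lemma lb0 (A : set X) (f : X -> R) : (forall x, 0 <= f x) -> has_lbound [set f a | a in A].
Proof. by move=> h; exists 0 => _ [a _ <-]. Qed.

Lemma covK_upper e : 0 < e -> covers_with (@hausdorff R X d) setT e (2 ^ covnum d setT (e/2)).
Proof.
move=> e0.
have e20 : 0 < e/2 by rewrite divr_gt0.
have [[E [hE hcov]] _] := covnumP (cover_ex (e/2) e20).
set n := covnum d setT (e/2) in hE *.
pose sT (T : {set 'I_n}) := [seq nth x0 E (val i) | i <- enum T].
exists [seq toK (sT T) | T <- enum (powerset [set: 'I_n])]; split.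
  by rewrite size_map -cardE card_powerset cardsT card_ord.
move=> A _.
have [Pne Pcl] := proj2_sig A.
set P := proj1_sig A in Pne Pcl *.
pose T : {set 'I_n} := finset (fun i : 'I_n => `[< exists2 a, P a & d (nth x0 E i) a < e/2 >]).
have memQ : forall y, List.In y (sT T) <-> exists2 i : 'I_n, i \in T & y = nth x0 E i.
  move=> y; rewrite /sT; split.
   - move=> /List.in_map_iff [i [<- hi]]; exists i => //; rewrite -mem_enum; exact: mem_In.
   - move=> [i hi ->]; apply/List.in_map_iff; exists i; split => //; apply: In_mem; by rewrite mem_enum.
have cov_i : forall y, exists2 i : 'I_n, d (nth x0 E i) y < e/2 & True.
  move=> y; have [c hc' hyc] := hcov y I; have [i hi hci] := In_nth x0 hc'.
  rewrite hE in hi; exists (Ordinal hi) => //=; by rewrite hci.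
have Qne : exists y, List.In y (sT T).
  have [a ha] := Pne; have [i hi _] := cov_i a.
  exists (nth x0 E i); apply/memQ; exists i => //; rewrite inE; apply/asboolP; by exists a.
exists (toK (sT T)).
  apply/List.in_map_iff; exists T; split => //; apply: In_mem; by rewrite mem_enum powersetE.
rewrite /dball /= /hausdorff /hausdorff_dist toK_val // -/P.
apply: (@le_lt_trans _ _ (e/2)); last by rewrite ltr_pdivrMr // ltr_pMr // ltr1n.
rewrite ge_max; apply/andP; split.
- apply: ge_sup.
  + have [y hy] := Qne; by exists (inf [set d y b | b in P]), y.
    move=> z [y /memQ [i hi ->] <-].
    move: hi; rewrite inE => /asboolP [a ha hia].
    apply: le_trans (ltW hia).
    apply: (ge_inf (lb0 _ _ (d_ge0 _))); by exists a.
- apply: ge_sup.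
  + have [a ha] := Pne; by exists (inf [set d q a | q in [set y | List.In y (sT T)]]), a.
  + move=> _ [a ha <-].
    have [i hi _] := cov_i a.
    apply: le_trans (ltW hi).
    apply: (ge_inf (lb0 _ (fun q => d q a) (fun q => d_ge0 _ _))).
    exists (nth x0 E i) => //; apply/memQ; exists i => //; rewrite inE; apply/asboolP; by exists a.
Qed.

Lemma nth_In' (T : Type) (y0 : T) s i : (i < size s)%N -> List.In (nth y0 s i) s.
Proof.
elim: s i => [|a s IH] [|i] //= hi; first by left.
by right; apply: IH.
Qed.

Definition sep e (L : seq X) := forall i j, (i < size L)%N -> (j < size L)%N -> i <> j ->
  2 * e <= d (nth x0 L i) (nth x0 L j).

Lemma sep_size e L : 0 < e -> sep e L -> (size L <= covnum d setT e)%N.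
Proof.
move=> e0 hs.
have [[E [hE hcov]] _] := covnumP (cover_ex e e0).
set N := covnum d setT e in hE *.
have ex : forall i : 'I_(size L), exists j : 'I_N, `[< d (nth x0 E j) (nth x0 L i) < e >].
  move=> i; have [c hc' hyc] := hcov (nth x0 L i) I; have [j hj hcj] := In_nth x0 hc'.
  rewrite hE in hj; exists (Ordinal hj); apply/asboolP => /=; by rewrite hcj.
pose f i := xchoose (ex i).
have finj : injective f.
  move=> i j hij; apply/val_inj/eqP; apply/negPn/negP => /eqP hne.
  have := xchooseP (ex i); have := xchooseP (ex j); rewrite -/(f i) -/(f j) hij.
  move=> /asboolP h1 /asboolP h2.
  have := hs _ _ (ltn_ord i) (ltn_ord j) hne.
  apply/negP; rewrite -ltNge.
  apply: (le_lt_trans (d_tri _ (nth x0 E (f j)) _)).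
  rewrite mulr_natl mulr2n; apply: ltrD => //; by rewrite d_sym.
have := leq_card f finj; by rewrite !card_ord.
Qed.

Lemma sep_max e : 0 < e -> exists L, sep e L /\ (covnum d setT (2 * e) <= size L)%N.
Proof.
move=> e0.
pose P k := `[< exists L, size L = k /\ sep e L >].
have exP : exists k, P k by exists 0%N; apply/asboolP; exists [::]; split => // i j.
have ubP : forall k, P k -> (k <= covnum d setT e)%N.
  by move=> k /asboolP [L [<- hL]]; exact: sep_size.
case: (ex_maxnP exP ubP) => m /asboolP [L [hLm hL]] hmax.
exists L; split => //.
have e2 : 0 < 2 * e by rewrite mulr_gt0.
have [_ hmin] := covnumP (cover_ex _ e2).
apply: hmin; exists L; split => // x _.
case: (pselect (exists2 y, List.In y L & d y x < 2 * e)) => [[y hy hyx]|hno].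
  by exists y.
exfalso.
have : P (size (x :: L)).
  apply/asboolP; exists (x :: L); split => //.
  move=> [|i] [|j] //= hi hj hij.
  - rewrite d_sym leNgt; apply/negP => h; apply: hno; exists (nth x0 L j) => //.
    exact: nth_In'.
  - rewrite leNgt; apply/negP => h; apply: hno; exists (nth x0 L i) => //.
    exact: nth_In'.
  - by apply: hL => // h; apply: hij; rewrite h.
by move/hmax; rewrite /= hLm ltnn.
Qed.

Lemma covK_lower e : 0 < e -> forall L, sep e L ->
  (2 ^ size L <= (covnum (@hausdorff R X d) setT e).+1)%N.
Proof.
move=> e0 L hL.
have [D hD] := dbounded.
have [[C [hC hcov]] _] := covnumP (ex_intro _ _ (covK_upper e e0)).
set b := covnum (@hausdorff R X d) setT e in hC *.
set m := size L.
pose sQ (S : {set 'I_m}) := [seq nth x0 L (val i) | i <- enum S].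
pose Q (S : {set 'I_m}) := toK (sQ S).
have memQ : forall S y, List.In y (sQ S) <-> exists2 i : 'I_m, i \in S & y = nth x0 L i.
  move=> S y; rewrite /sQ; split.
   - move=> /List.in_map_iff [i [<- hi]]; exists i => //; rewrite -mem_enum; exact: mem_In.
   - move=> [i hi ->]; apply/List.in_map_iff; exists i; split => //; apply: In_mem; by rewrite mem_enum.
have ex : forall S, exists k : 'I_b, `[< @hausdorff R X d (nth (toK [::]) C k) (Q S) < e >].
  move=> S; have [c hc' hcS] := hcov (Q S) I; have [k hk hck] := In_nth (toK [::]) hc'.
  rewrite hC in hk; exists (Ordinal hk); apply/asboolP => /=; rewrite hck; exact: hcS.
pose g (S : {set 'I_m}) : 'I_b.+1 :=
  if S == finset.set0 then ord_max else widen_ord (leqnSn b) (xchoose (ex S)).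
have key : forall k S S' (i : 'I_m), @hausdorff R X d (nth (toK [::]) C k) (Q S) < e ->
    @hausdorff R X d (nth (toK [::]) C k) (Q S') < e -> S' != finset.set0 -> i \in S -> i \in S'.
  move=> k S S' i h1 h2 hS' hi; apply/negPn/negP => hi'.
  set c := nth (toK [::]) C k in h1 h2.
  have [cne _] := proj2_sig c.
  have QS : proj1_sig (Q S) = [set y | List.In y (sQ S)].
    by apply: toK_val; exists (nth x0 L i); apply/memQ; exists i.
  have QS' : proj1_sig (Q S') = [set y | List.In y (sQ S')].
    apply: toK_val; have /set0Pn [j hj] := hS'.
    by exists (nth x0 L j); apply/memQ; exists j.
  move: h1 h2; rewrite /hausdorff /hausdorff_dist QS QS' !gt_max => /andP [_ h1] /andP [h2 _].
  have [a0 ha0] := cne.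
  have hb1 : inf [set d a (nth x0 L i) | a in proj1_sig c] < e.
    apply: le_lt_trans h1; apply: ub_le_sup.
      exists D => _ [y hy <-]; apply: le_trans (hD a0 y).
      apply: (ge_inf (lb0 _ (fun a => d a y) (fun a => d_ge0 _ _))); by exists a0.
    exists (nth x0 L i) => //; apply/memQ; by exists i.
  have [_ [a ha <-] hab] := inf_lt (ex_intro _ _ (ex_intro2 _ _ a0 ha0 erefl)) hb1.
  have hb2 : inf [set d a y | y in [set y | List.In y (sQ S')]] < e.
    apply: le_lt_trans h2; apply: ub_le_sup.
      exists D => _ [y hy <-]; have /set0Pn [j hj] := hS'.
      apply: le_trans (hD y (nth x0 L j)).
      apply: (ge_inf (lb0 _ _ (d_ge0 y))); exists (nth x0 L j) => //; apply/memQ; by exists j.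
    by exists a.
  have [y0 hy0] : exists y, List.In y (sQ S').
    by have /set0Pn [j hj] := hS'; exists (nth x0 L j); apply/memQ; exists j.
  have [_ [y' hy' <-] hay] := inf_lt (ex_intro _ _ (ex_intro2 _ _ y0 hy0 erefl)) hb2.
  move/memQ: hy' => [j' hj' ->] in hay.
  have hij : val i <> val j'.
    by move=> h; move/negP: hi'; apply; rewrite (_ : i = j') //; exact/val_inj.
  have := hL _ _ (ltn_ord i) (ltn_ord j') hij.
  apply/negP; rewrite -ltNge.
  apply: (le_lt_trans (d_tri _ a _)).
  rewrite mulr_natl mulr2n; apply: ltrD => //; by rewrite d_sym.
have ginj : injective g.
  move=> S S'; rewrite /g; case: (S =P finset.set0) => [->|/eqP hS]; case: (S' =P finset.set0) => [->|/eqP hS'] //.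
  - move=> /(congr1 val) /= h; have := ltn_ord (xchoose (ex S')); by rewrite -h ltnn.
  - move=> /(congr1 val) /= h; have := ltn_ord (xchoose (ex S)); by rewrite h ltnn.
  - move=> /(congr1 val) /= /val_inj hk.
    have /asboolP h1 := xchooseP (ex S); have /asboolP h2 := xchooseP (ex S').
    rewrite hk in h1.
    apply/setP => i; apply/idP/idP; [exact: key h1 h2 hS' | exact: key h2 h1 hS].
have := leq_card g ginj; rewrite card_ord; apply: leq_trans.
have -> : (2 ^ m = #|powerset [set: 'I_m]|)%N by rewrite card_powerset cardsT card_ord.
exact: max_card.
Qed.

Lemma mo_upper : (upper_metric_order (@hausdorff R X d) setT <= upper_box_dim d setT)%E.
Proof.
apply: ereal_le_approx_hi => r hr t t0.
have [D D0 HD] := limsup0_lt hr.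
apply: limsup0_le.
pose K := expR (- (r * ln 2) / t).
have K0 : 0 < K by rewrite expR_gt0.
exists (Num.min (Num.min D 1) K); first by rewrite !lt_min D0 ltr01 K0.
move=> e /andP [e0]; rewrite !lt_min => /andP [/andP [eD e1] eK].
rewrite /mo_ratio lee_fin.
have e20 : 0 < e / 2 by rewrite divr_gt0.
set A := covnum d setT (e/2).
set B := covnum (@hausdorff R X d) setT e.
have hA : (1 <= A)%N := covnum_ge1 _ d x0 (e/2) (cover_ex _ e20).
have hB : (1 <= B)%N := covnum_ge1 _ _ (toK [::]) e (ex_intro _ _ (covK_upper e e0)).
have hBA : (B <= 2 ^ A)%N := (covnumP (ex_intro _ _ (covK_upper e e0))).2 _ (covK_upper e e0).
have hup := @lnln_up R A B hA hB hBA.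
have e2D : e / 2 < D.
  apply: lt_trans eD; rewrite ltr_pdivrMr // ltr_pMr // ltr1n //.
have hbox := HD (e/2) (introT andP (conj e20 e2D)).
rewrite /box_ratio lte_fin in hbox.
have le0 : 0 < - ln e by rewrite oppr_gt0 ln_lt0 // e0 e1.
have lne2 : ln (e/2) = ln e - ln 2 by rewrite lnM ?posrE ?invr_gt0 // lnV ?posrE.
rewrite lne2 in hbox.
have l2 := ln2_gt0 R.
have hL2 : 0 < - (ln e - ln 2) by lra.
rewrite ltr_pdivrMr // in hbox.
have hK : ln e < - (r * ln 2) / t by rewrite -(expRK (- (r * ln 2) / t)) ltr_ln ?posrE.
rewrite ltr_pdivlMr // in hK.
rewrite ler_pdivrMr //.
nra.
Qed.

Lemma mo_lower : (lower_box_dim d setT <= lower_metric_order (@hausdorff R X d) setT)%E.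
Proof.
apply: ereal_le_approx_lo => r hr t t0.
have [D D0 HD] := liminf0_gt hr.
apply: liminf0_ge.
pose r' := Num.max r 0.
have hrr : r <= r' /\ 0 <= r' by split; rewrite /r' le_max lexx ?orbT.
have hr'c : r' = r \/ r' = 0.
  by rewrite /r'; case: leP => _; [right|left].
pose c := ln (ln (2:R) / 2).
pose K := expR (- (r' * ln 2 - c) / t).
have K0 : 0 < K by rewrite expR_gt0.
have D20 : 0 < D / 2 by rewrite divr_gt0.
exists (Num.min (Num.min (D/2) (1/2)) K); first by rewrite !lt_min D20 K0 divr_gt0.
move=> e /andP [e0]; rewrite !lt_min => /andP [/andP [eD e1] eK].
rewrite /mo_ratio lee_fin.
have e20 : 0 < 2 * e by rewrite mulr_gt0.
have [L [hL hAL]] := sep_max e e0.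
set A := covnum d setT (2 * e).
set B := covnum (@hausdorff R X d) setT e.
have hA : (1 <= A)%N := covnum_ge1 _ d x0 (2 * e) (cover_ex _ e20).
have hB : (1 <= B)%N := covnum_ge1 _ _ (toK [::]) e (ex_intro _ _ (covK_upper e e0)).
have hAB : (2 ^ A <= B.+1)%N.
  apply: leq_trans (covK_lower e e0 L hL); by rewrite leq_pexp2l.
have hlo := @lnln_lo R A B hA hB hAB.
have e2D : 2 * e < D by rewrite mulrC -ltr_pdivlMr.
have e21 : 2 * e < 1 by rewrite mulrC -ltr_pdivlMr // div1r.
have hbox := HD (2 * e) (introT andP (conj e20 e2D)).
rewrite /box_ratio lte_fin in hbox.
have l2 := ln2_gt0 R.
have lne2 : ln (2 * e) = ln 2 + ln e by rewrite lnM ?posrE.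
have hL2 : 0 < - ln (2 * e) by rewrite oppr_gt0 ln_lt0 // e20 e21.
rewrite ltr_pdivlMr // in hbox.
rewrite lne2 in hbox hL2.
have e1' : e < 1 by apply: (lt_trans e1); rewrite ltr_pdivrMr // mul1r ltr1n.
have le0 : 0 < - ln e by rewrite oppr_gt0 ln_lt0 // e0 e1'.
have hA0 : 0 <= ln (A%:R : R) := ln_nat_ge0 R hA.
have hr' : r' * (- (ln 2 + ln e)) <= ln (A%:R : R).
  case: hr'c => ->; [exact: ltW | by rewrite mul0r].
have hK : ln e < - (r' * ln 2 - c) / t by rewrite -(expRK (- (r' * ln 2 - c) / t)) ltr_ln ?posrE.
rewrite ltr_pdivlMr // in hK.
rewrite ler_pdivlMr //.
have hrr' : 0 <= (r' - r) * (- ln e) by apply: mulr_ge0; [rewrite subr_ge0; case: hrr|exact: ltW].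
rewrite -/c in hlo.
nra.
Qed.

End Metric.

Theorem proposition4p5 (R : realType) (X : Type) (d : X -> X -> R)
  (hmetric : is_metric d) (hnonempty : exists x : X, True)
  (hcompact : dcompact d) :
  (lower_box_dim d setT <= lower_metric_order (@hausdorff R X d) setT)%E /\
  (lower_metric_order (@hausdorff R X d) setT
     <= upper_metric_order (@hausdorff R X d) setT)%E /\
  (upper_metric_order (@hausdorff R X d) setT <= upper_box_dim d setT)%E.
Proof.
have [x0 _] := hnonempty.
split; first exact: (@mo_lower R X d hmetric x0 hcompact).
split; first exact: liminf0_le_limsup0.
exact: (@mo_upper R X d hmetric x0 hcompact).
Qed.
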